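(* Let $\mathbf{A}\in\mathbb{C}^{M\times N_a}$ and $\mathbf{B}\in\mathbb{C}^{M\times N_b}$ have unit-$\ell_2$-norm columns, let $\mathbf{D}=[\mathbf{A}\ \mathbf{B}]$ with coherence parameters $\mu_a,\mu_b,\mu_m$ and $\mu_d=\max\{\mu_a,\mu_b,\mu_m\}$, and assume $\mu_b\le\mu_a$. For each integer $w\ge1$ let $\delta_w$ be the smallest number such that $(1-\delta_w)\|\mathbf{w}\|_2^2\le\|\mathbf{D}\mathbf{w}\|_2^2\le(1+\delta_w)\|\mathbf{w}\|_2^2$ for all $\mathbf{w}\in\mathbb{C}^{N_a+N_b}$ with at most $w$ nonzero entries. Then $$\delta_w\le\min\left\{\frac12\Big(\mu_a(w-2)+w\sqrt{\mu_a^2+\mu_m^2}\Big),\ \mu_d(w-1)\right\}.$$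
   Context: Coherence parameters: $\mu_a=\max_{k\ne\ell}|\mathbf{a}_k^H\mathbf{a}_\ell|$, $\mu_b=\max_{k\ne\ell}|\mathbf{b}_k^H\mathbf{b}_\ell|$, $\mu_m=\max_{k,\ell}|\mathbf{a}_k^H\mathbf{b}_\ell|$, where $\mathbf{a}_k,\mathbf{b}_\ell$ are the columns of $\mathbf{A},\mathbf{B}$. *)

(* Defs.v *)
(* Complex numbers: an arbitrary numClosedFieldType C
   (e.g. algC); norms `|x| take real values in C. *)
From HB Require Import structures.
From mathcomp Require Import all_boot all_order all_algebra.
Set Implicit Arguments. Unset Strict Implicit. Unset Printing Implicit Defensive.
Import Order.TTheory GRing.Theory Num.Theory.
Local Open Scope ring_scope.

Definition colip (C : numClosedFieldType) (M n p : nat)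
  (A : 'M[C]_(M, n)) (B : 'M[C]_(M, p)) (k : 'I_n) (l : 'I_p) : C :=
  \sum_(i < M) (A i k)^* * B i l.

Definition norm2 (C : numClosedFieldType) (n : nat) (v : 'cV[C]_n) : C :=
  \sum_(i < n) `|v i 0| ^+ 2.

Definition unit_cols (C : numClosedFieldType) (M n : nat) (A : 'M[C]_(M, n)) :=
  forall k : 'I_n, \sum_(i < M) `|A i k| ^+ 2 = 1.

(* mu_a = max_{k <> l} |a_k^H a_l|  (0 if there is no such pair). *)
Definition self_coh (C : numClosedFieldType) (M n : nat) (A : 'M[C]_(M, n)) : C :=
  \big[Num.max/0]_(k < n) \big[Num.max/0]_(l < n | l != k) `|colip A A k l|.

Definition mutual_coh (C : numClosedFieldType) (M n p : nat)
  (A : 'M[C]_(M, n)) (B : 'M[C]_(M, p)) : C :=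
  \big[Num.max/0]_(k < n) \big[Num.max/0]_(l < p) `|colip A B k l|.

Definition nnz (C : numClosedFieldType) (n : nat) (v : 'cV[C]_n) : nat :=
  #|[set i : 'I_n | v i 0 != 0]|.

Definition rip_bound (C : numClosedFieldType) (M n : nat) (D : 'M[C]_(M, n))
  (w : nat) (d : C) :=
  forall v : 'cV[C]_n, (nnz v <= w)%N ->
    (1 - d) * norm2 v <= norm2 (D *m v) <= (1 + d) * norm2 v.

Definition is_ric (C : numClosedFieldType) (M n : nat) (D : 'M[C]_(M, n))
  (w : nat) (d : C) :=
  rip_bound D w d /\ forall d' : C, rip_bound D w d' -> d <= d'.

(* Main.v *)
Require Import Defs.
From HB Require Import structures.
From mathcomp Require Import all_boot all_order all_algebra.
From mathcomp Require Import ring.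
Import Order.TTheory GRing.Theory Num.Theory.
Local Open Scope ring_scope.

Section S.
Variable C : numClosedFieldType.

Lemma expand M n (D : 'M[C]_(M,n)) (v : 'cV[C]_n) :
 norm2 (D *m v) = \sum_j \sum_k ((v j 0)^* * v k 0 * colip D D j k).
Proof.
rewrite /norm2 /colip.
under eq_bigr => i _ do rewrite normCKC !mxE rmorph_sum mulr_suml.
rewrite exchange_big /=; apply: eq_bigr => j _.
under eq_bigr => i _ do rewrite mulr_sumr.
rewrite exchange_big /=; apply: eq_bigr => k _.
rewrite mulr_sumr; apply: eq_bigr => i _.
rewrite rmorphM /=; ring.
Qed.
End S.


Section S.
Variable C : numClosedFieldType.

Lemma norm2_expand n (v : 'cV[C]_n) :
 norm2 v = \sum_j \sum_k ((v j 0)^* * v k 0 * (j == k)%:R).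
Proof.
rewrite /norm2; apply: eq_bigr => j _.
rewrite (bigD1 j) //= eqxx mulr1 big1 ?addr0 ?normCKC //.
by move=> k; rewrite eq_sym => /negbTE->; rewrite mulr0.
Qed.

Lemma diff_bound M n (D : 'M[C]_(M,n)) (v : 'cV[C]_n) :
 `|norm2 (D *m v) - norm2 v| <=
   \sum_j \sum_k (`|v j 0| * `|v k 0| * `|colip D D j k - (j == k)%:R|).
Proof.
rewrite expand norm2_expand -sumrB.
apply: le_trans (ler_norm_sum _ _ _) _; apply: ler_sum => j _.
rewrite -sumrB.
apply: le_trans (ler_norm_sum _ _ _) _; apply: ler_sum => k _.
by rewrite -mulrBr !normrM norm_conjC.
Qed.
End S.


Section S.
Variable C : numClosedFieldType.

Lemma norm2_ge0 n (v : 'cV[C]_n) : 0 <= norm2 v.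
Proof. by apply: sumr_ge0 => i _; exact: exprn_ge0. Qed.

Lemma rip_of M n (D : 'M[C]_(M,n)) w d :
  (forall v, (nnz v <= w)%N -> `|norm2 (D *m v) - norm2 v| <= d * norm2 v) ->
  rip_bound D w d.
Proof.
move=> h v hv; have := h v hv.
rewrite real_ler_norml; last by apply: realB; apply: ger0_real; exact: norm2_ge0.
case/andP => h1 h2; rewrite mulrBl mulrDl !mul1r; apply/andP; split.
  by rewrite lerBrDl in h1.
by rewrite lerBlDr addrC in h2.
Qed.

Lemma CS n (x y : 'I_n -> C) : (forall i, x i \is Num.real) -> (forall i, y i \is Num.real) ->
  (\sum_i x i * y i) ^+ 2 <= (\sum_i x i ^+ 2) * (\sum_i y i ^+ 2).
Proof.
move=> hx hy.
set S1 := \sum_i \sum_j (x i ^+ 2 * y j ^+ 2).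
set S2 := \sum_i \sum_j (x i * y i * (x j * y j)).
have e1 : (\sum_i x i ^+ 2) * (\sum_i y i ^+ 2) = S1.
  by rewrite mulr_suml; apply: eq_bigr => i _; rewrite mulr_sumr.
have e2 : (\sum_i x i * y i) ^+ 2 = S2.
  by rewrite expr2 mulr_suml; apply: eq_bigr => i _; rewrite mulr_sumr.
have e3 : \sum_i \sum_j (x j ^+ 2 * y i ^+ 2) = S1 by rewrite exchange_big.
have E : \sum_i \sum_j (x i * y j - x j * y i) ^+ 2 = 2 * (S1 - S2).
  transitivity (\sum_i \sum_j (x i ^+ 2 * y j ^+ 2 + x j ^+ 2 * y i ^+ 2
      - 2 * (x i * y i * (x j * y j)))).
    by apply: eq_bigr => i _; apply: eq_bigr => j _; ring.
  have e4 : \sum_i \sum_j 2 * (x i * y i * (x j * y j)) = 2 * S2.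
    by rewrite /S2 mulr_sumr; apply: eq_bigr => i _; rewrite mulr_sumr.
  under eq_bigr => i _ do rewrite sumrB big_split /=.
  rewrite sumrB big_split /= e3 e4 -/S1; ring.
have : 0 <= 2 * (S1 - S2).
  rewrite -E; apply: sumr_ge0 => i _; apply: sumr_ge0 => j _.
  by rewrite -realEsqr; apply: realB; apply: realM.
by rewrite pmulr_rge0 // subr_ge0 e1 e2.
Qed.
End S.


Section S.
Variable C : numClosedFieldType.

Lemma le_maxl (x y : C) : x \is Num.real -> y \is Num.real -> x <= Num.max x y.
Proof. by move=> hx hy; case: (real_leP hx hy). Qed.
Lemma le_maxr (x y : C) : x \is Num.real -> y \is Num.real -> y <= Num.max x y.
Proof. by move=> hx hy; case: (real_leP hx hy) => // /ltW. Qed.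

Lemma bigmax_ge0 (I : Type) (r : seq I) (P : pred I) (F : I -> C) :
  (forall i, F i \is Num.real) -> 0 <= \big[Num.max/0]_(i <- r | P i) F i.
Proof.
move=> hF; elim/big_rec: _ => // i x _ hx.
apply: (le_trans hx); apply: le_maxr; [exact: hF | exact: ger0_real hx].
Qed.

Lemma le_bigmax (I : eqType) (r : seq I) (P : pred I) (F : I -> C) i :
  (forall i, F i \is Num.real) -> i \in r -> P i ->
  F i <= \big[Num.max/0]_(j <- r | P j) F j.
Proof.
move=> hF; elim: r => // a r IH; rewrite inE big_cons => /orP [/eqP-> | ir] Pi.
  by rewrite Pi; apply: le_maxl => //; apply: bigmax_real => //.
have hb : \big[Num.max/0]_(j <- r | P j) F j \is Num.real by apply: bigmax_real.
case: (P a); last exact: IH.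
by apply: le_trans (IH ir Pi) _; apply: le_maxr.
Qed.

Lemma le_bigmax_ord n (P : pred 'I_n) (F : 'I_n -> C) i :
  (forall i, F i \is Num.real) -> P i -> F i <= \big[Num.max/0]_(j < n | P j) F j.
Proof. by move=> hF Pi; apply: le_bigmax => //; rewrite mem_index_enum. Qed.

Lemma self_coh_ge0 M n (A : 'M[C]_(M, n)) : 0 <= self_coh A.
Proof. apply: bigmax_ge0 => k; apply: bigmax_real => // l _; exact: normr_real. Qed.
Lemma mutual_coh_ge0 M n p (A : 'M[C]_(M, n)) (B : 'M[C]_(M, p)) : 0 <= mutual_coh A B.
Proof. apply: bigmax_ge0 => k; apply: bigmax_real => // l _; exact: normr_real. Qed.

Lemma self_coh_le M n (A : 'M[C]_(M, n)) k l : l != k -> `|colip A A k l| <= self_coh A.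
Proof.
move=> hlk.
have h1 : `|colip A A k l| <= \big[Num.max/0]_(l0 < n | l0 != k) `|colip A A k l0|.
  by apply: (@le_bigmax_ord n (fun l0 => l0 != k) (fun l0 => `|colip A A k l0|)) => // j; exact: normr_real.
apply: le_trans h1 _; rewrite /self_coh.
apply: (@le_bigmax_ord n xpredT (fun k0 => \big[Num.max/0]_(l0 < n | l0 != k0) `|colip A A k0 l0|)) => //.
by move=> j; apply: bigmax_real => // l' _; exact: normr_real.
Qed.

Lemma mutual_coh_le M n p (A : 'M[C]_(M, n)) (B : 'M[C]_(M, p)) k l :
  `|colip A B k l| <= mutual_coh A B.
Proof.
have h1 : `|colip A B k l| <= \big[Num.max/0]_(l0 < p) `|colip A B k l0|.
  by apply: (@le_bigmax_ord p xpredT (fun l0 => `|colip A B k l0|)) => // j; exact: normr_real.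
apply: le_trans h1 _; rewrite /mutual_coh.
apply: (@le_bigmax_ord n xpredT (fun k0 => \big[Num.max/0]_(l0 < p) `|colip A B k0 l0|)) => //.
by move=> j; apply: bigmax_real => // l' _; exact: normr_real.
Qed.

Lemma colip_unit M n (A : 'M[C]_(M, n)) k : unit_cols A -> colip A A k k = 1.
Proof. by move=> h; rewrite /colip -(h k); apply: eq_bigr => i _; rewrite normCKC. Qed.

Lemma colip_sym M n p (A : 'M[C]_(M, n)) (B : 'M[C]_(M, p)) k l :
  colip B A l k = (colip A B k l)^*.
Proof.
rewrite /colip rmorph_sum; apply: eq_bigr => i _.
by rewrite rmorphM /= conjCK mulrC.
Qed.

Lemma sum_neq n (F : 'I_n -> C) j : \sum_k F k * (j != k)%:R = \sum_k F k - F j.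
Proof.
rewrite [X in _ = X - _](bigD1 j) //= (bigD1 j) //= eqxx mulr0 add0r addrC addrK.
by apply: eq_bigr => k; rewrite eq_sym => ->; rewrite mulr1.
Qed.

Lemma qf n (a : 'I_n -> C) (E : 'I_n -> 'I_n -> C) m :
  (forall i, 0 <= a i) -> (forall j k, E j k <= m * (j != k)%:R) ->
  \sum_j \sum_k (a j * a k * E j k) <= m * ((\sum_j a j) ^+ 2 - \sum_j a j ^+ 2).
Proof.
move=> ha hE.
apply: le_trans (_ : \sum_j \sum_k (a j * a k * m * (j != k)%:R) <= _).
  apply: ler_sum => j _; apply: ler_sum => k _.
  by rewrite -[X in _ <= X]mulrA; apply: ler_wpM2l; [apply: mulr_ge0 | exact: hE].
rewrite le_eqVlt; apply/orP; left; apply/eqP.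
under eq_bigr => j _ do rewrite sum_neq.
rewrite sumrB expr2 mulr_suml mulrBr; congr (_ - _).
  rewrite mulr_sumr; apply: eq_bigr => j _; rewrite mulr_sumr mulr_sumr.
  by apply: eq_bigr => k _; ring.
by rewrite mulr_sumr; apply: eq_bigr => j _; ring.
Qed.

Lemma qf2 n p (a : 'I_n -> C) (b : 'I_p -> C) (E : 'I_n -> 'I_p -> C) m :
  (forall i, 0 <= a i) -> (forall i, 0 <= b i) -> (forall j k, E j k <= m) ->
  \sum_j \sum_k (a j * b k * E j k) <= m * ((\sum_j a j) * (\sum_k b k)).
Proof.
move=> ha hb hE.
rewrite mulr_suml mulr_sumr; apply: ler_sum => j _.
rewrite mulr_sumr mulr_sumr; apply: ler_sum => k _.
by rewrite [X in _ <= X]mulrC; apply: ler_wpM2l; [apply: mulr_ge0 | exact: hE].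
Qed.
End S.


Section S.
Variable C : numClosedFieldType.

Lemma sq_le (x y : C) : 0 <= x -> 0 <= y -> x ^+ 2 <= y ^+ 2 -> x <= y.
Proof. by move=> hx hy; rewrite (@ler_pXn2r _ 2) // nnegrE. Qed.

Lemma two_neq0 : (2 : C) != 0.
Proof. by rewrite pnatr_eq0. Qed.

Lemma key (ma mm r al be P Q sa sb w : C) :
  0 <= ma -> 0 <= mm -> 0 <= r -> r ^+ 2 = ma ^+ 2 + mm ^+ 2 ->
  0 <= al -> 0 <= be -> 0 <= P -> 0 <= Q ->
  al ^+ 2 <= sa * P -> be ^+ 2 <= sb * Q -> 0 <= sa -> 0 <= sb -> sa + sb <= w ->
  ma * (al ^+ 2 - P) + mm * (al * be) + (mm * (be * al) + ma * (be ^+ 2 - Q))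
  <= 2^-1 * (ma * (w - 2) + w * r) * (P + Q).
Proof.
move=> ma0 mm0 r0 hr al0 be0 P0 Q0 hal hbe sa0 sb0 hw.
have hrma : ma <= r.
  by apply: sq_le => //; rewrite hr lerDl; apply: exprn_ge0.
have rma0 : 0 <= r - ma by rewrite subr_ge0.
have mar0 : 0 <= ma + r by apply: addr_ge0.
set T := 2^-1 * (ma * w + w * r).
set X := T - ma * sa.
set Y := T - ma * sb.
set X0 := 2^-1 * (sb * (ma + r) + sa * (r - ma)).
set Y0 := 2^-1 * (sa * (ma + r) + sb * (r - ma)).
have i2 : 0 <= (2^-1 : C) by rewrite invr_ge0 ler0n.
have X00 : 0 <= X0 by apply: mulr_ge0 => //; apply: addr_ge0; apply: mulr_ge0.
have Y00 : 0 <= Y0 by apply: mulr_ge0 => //; apply: addr_ge0; apply: mulr_ge0.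
have ws0 : 0 <= w - (sa + sb) by rewrite subr_ge0.
have hX : X0 <= X.
  rewrite -subr_ge0.
  have -> : X - X0 = 2^-1 * (ma + r) * (w - (sa + sb)) by rewrite /X /X0 /T; field.
  by apply: mulr_ge0 => //; apply: mulr_ge0.
have hY : Y0 <= Y.
  rewrite -subr_ge0.
  have -> : Y - Y0 = 2^-1 * (ma + r) * (w - (sa + sb)) by rewrite /Y /Y0 /T; field.
  by apply: mulr_ge0 => //; apply: mulr_ge0.
have X0' : 0 <= X by apply: le_trans hX.
have Y0' : 0 <= Y by apply: le_trans hY.
have hXY : mm ^+ 2 * (sa * sb) <= X * Y.
  apply: le_trans (ler_pM X00 Y00 hX hY).
  rewrite -subr_ge0.
  have -> : X0 * Y0 - mm ^+ 2 * (sa * sb) =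
      (2^-1 * 2^-1) * (4 * sa * sb * ma ^+ 2 + mm ^+ 2 * (sa - sb) ^+ 2
        + (sa + sb) ^+ 2 * (r ^+ 2 - ma ^+ 2 - mm ^+ 2)).
    by rewrite /X0 /Y0; field.
  have hz : r ^+ 2 - ma ^+ 2 - mm ^+ 2 = 0 by rewrite hr; ring.
  rewrite hz mulr0 addr0.
  apply: mulr_ge0; first by apply: mulr_ge0.
  apply: addr_ge0; first by do 3?apply: mulr_ge0 => //; apply: exprn_ge0.
  apply: mulr_ge0; first exact: exprn_ge0.
  by rewrite -realEsqr; apply: realB; apply: ger0_real.
have hcross : 2 * mm * (al * be) <= X * P + Y * Q.
  apply: sq_le.
  - by do 2?apply: mulr_ge0 => //.
  - by apply: addr_ge0; apply: mulr_ge0.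
  have e1 : (2 * mm * (al * be)) ^+ 2 = 4 * (mm ^+ 2 * (al ^+ 2 * be ^+ 2)) by ring.
  rewrite e1.
  have h4 : (0 : C) <= 4 by rewrite ler0n.
  have s1 : 4 * (mm ^+ 2 * (al ^+ 2 * be ^+ 2)) <= 4 * (mm ^+ 2 * ((sa * P) * (sb * Q))).
    apply: ler_wpM2l => //; apply: ler_wpM2l; first exact: exprn_ge0.
    by apply: ler_pM => //; apply: exprn_ge0.
  apply: le_trans s1 _.
  have e2 : 4 * (mm ^+ 2 * ((sa * P) * (sb * Q))) = 4 * (mm ^+ 2 * (sa * sb)) * (P * Q) by ring.
  rewrite e2.
  have s2 : 4 * (mm ^+ 2 * (sa * sb)) * (P * Q) <= 4 * (X * Y) * (P * Q).
    by apply: ler_wpM2r; [apply: mulr_ge0 | apply: ler_wpM2l].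
  apply: le_trans s2 _.
  rewrite -subr_ge0.
  have -> : (X * P + Y * Q) ^+ 2 - 4 * (X * Y) * (P * Q) = (X * P - Y * Q) ^+ 2 by ring.
  rewrite -realEsqr; apply: realB; apply: ger0_real; apply: mulr_ge0 => //.
have e3 : ma * (al ^+ 2 - P) + mm * (al * be) + (mm * (be * al) + ma * (be ^+ 2 - Q))
   = ma * al ^+ 2 + ma * be ^+ 2 + 2 * mm * (al * be) - ma * (P + Q) by ring.
have e4 : 2^-1 * (ma * (w - 2) + w * r) * (P + Q)
   = ma * sa * P + ma * sb * Q + (X * P + Y * Q) - ma * (P + Q) by rewrite /X /Y /T; field.
rewrite e3 e4 lerD2r; apply: lerD => //.
apply: lerD; rewrite -mulrA; apply: ler_wpM2l => //.
Qed.
End S.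


Section S.
Variable C : numClosedFieldType.
Variables (M Na Nb : nat) (A : 'M[C]_(M, Na)) (B : 'M[C]_(M, Nb)).
Hypothesis hA : unit_cols A.
Hypothesis hB : unit_cols B.
Let D := row_mx A B.

Lemma colip_ll j k : colip D D (lshift Nb j) (lshift Nb k) = colip A A j k.
Proof. by rewrite /colip; apply: eq_bigr => i _; rewrite !row_mxEl. Qed.
Lemma colip_lr j k : colip D D (lshift Nb j) (rshift Na k) = colip A B j k.
Proof. by rewrite /colip; apply: eq_bigr => i _; rewrite row_mxEl row_mxEr. Qed.
Lemma colip_rl j k : colip D D (rshift Na j) (lshift Nb k) = colip B A j k.
Proof. by rewrite /colip; apply: eq_bigr => i _; rewrite row_mxEl row_mxEr. Qed.
Lemma colip_rr j k : colip D D (rshift Na j) (rshift Na k) = colip B B j k.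
Proof. by rewrite /colip; apply: eq_bigr => i _; rewrite !row_mxEr. Qed.

Lemma E_ll j k : `|colip D D (lshift Nb j) (lshift Nb k) - (lshift Nb j == lshift Nb k)%:R|
  <= self_coh A * (j != k)%:R.
Proof.
rewrite colip_ll eq_shift; case: (eqVneq j k) => [->|hjk] /=.
  by rewrite colip_unit // subrr normr0 mulr0.
by rewrite subr0 mulr1; apply: self_coh_le; rewrite eq_sym.
Qed.
Lemma E_rr j k : `|colip D D (rshift Na j) (rshift Na k) - (rshift Na j == rshift Na k)%:R|
  <= self_coh B * (j != k)%:R.
Proof.
rewrite colip_rr eq_shift; case: (eqVneq j k) => [->|hjk] /=.
  by rewrite colip_unit // subrr normr0 mulr0.
by rewrite subr0 mulr1; apply: self_coh_le; rewrite eq_sym.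
Qed.
Lemma E_lr j k : `|colip D D (lshift Nb j) (rshift Na k) - (lshift Nb j == rshift Na k)%:R|
  <= mutual_coh A B.
Proof. by rewrite colip_lr eq_lrshift subr0; apply: mutual_coh_le. Qed.
Lemma E_rl j k : `|colip D D (rshift Na j) (lshift Nb k) - (rshift Na j == lshift Nb k)%:R|
  <= mutual_coh A B.
Proof. by rewrite colip_rl eq_rlshift subr0 colip_sym norm_conjC; apply: mutual_coh_le. Qed.

End S.

Lemma CS_ind (C : numClosedFieldType) n (u : 'I_n -> C) :
  (\sum_j `|u j|) ^+ 2 <= (\sum_j `|u j| ^+ 2) * (\sum_j ((u j != 0) : nat)%:R).
Proof.
have := @CS C n (fun j => `|u j|) (fun j => ((u j != 0) : nat)%:R) (fun j => normr_real _)
  (fun j => realn _ _).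
have e1 : \sum_j `|u j| * ((u j != 0) : nat)%:R = \sum_j `|u j|.
  by apply: eq_bigr => j _; case: (eqVneq (u j) 0) => [->|_]; rewrite ?normr0 ?mul0r ?mulr1.
have e2 : \sum_j (((u j != 0) : nat)%:R) ^+ 2 = \sum_j ((u j != 0) : nat)%:R :> C.
  by apply: eq_bigr => j _; case: (u j != 0); rewrite ?expr1n ?expr0n.
by rewrite e1 e2.
Qed.

Lemma nnz_sum (C : numClosedFieldType) n (v : 'cV[C]_n) :
  (nnz v)%:R = \sum_j ((v j 0 != 0) : nat)%:R :> C.
Proof.
rewrite /nnz -sum1dep_card natr_sum big_mkcond /=; apply: eq_bigr => j _.
by case: (v j 0 != 0).
Qed.


Theorem lemma2 (C : numClosedFieldType) (M Na Nb : nat)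
  (A : 'M[C]_(M, Na)) (B : 'M[C]_(M, Nb))
  (hA : unit_cols A) (hB : unit_cols B)
  (hab : self_coh B <= self_coh A)
  (w : nat) (hw : (1 <= w)%N) (delta : C)
  (hdelta : is_ric (row_mx A B) w delta) :
  let mu_a := self_coh A in
  let mu_b := self_coh B in
  let mu_m := mutual_coh A B in
  let mu_d := Num.max mu_a (Num.max mu_b mu_m) in
  delta <= Num.min
    (2^-1 * (mu_a * (w%:R - 2) + w%:R * sqrtC (mu_a ^+ 2 + mu_m ^+ 2)))
    (mu_d * (w%:R - 1)).
Proof.
cbv zeta.
set mu_a := self_coh A. set mu_b := self_coh B. set mu_m := mutual_coh A B.
set mu_d := Num.max mu_a (Num.max mu_b mu_m).
have ma0 : 0 <= mu_a by apply: self_coh_ge0.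
have mb0 : 0 <= mu_b by apply: self_coh_ge0.
have mm0 : 0 <= mu_m by apply: mutual_coh_ge0.
have hd : forall d, rip_bound (row_mx A B) w d -> delta <= d by case: hdelta.
have Rp : forall x : C, 0 <= x -> x \is Num.real by move=> x; exact: ger0_real.
have hda : mu_a <= mu_d by apply: le_maxl; [exact: Rp | apply: max_real; exact: Rp].
have hbm : Num.max mu_b mu_m <= mu_d by exact: le_maxr (Rp _ ma0) (max_real (Rp _ mb0) (Rp _ mm0)).
have hdb : mu_b <= mu_d.
  by apply: (le_trans _ hbm); exact: le_maxl (Rp _ mb0) (Rp _ mm0).
have hdm : mu_m <= mu_d.
  by apply: (le_trans _ hbm); exact: le_maxr (Rp _ mb0) (Rp _ mm0).
have md0 : 0 <= mu_d by apply: le_trans hda.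
have hcard : forall v : 'cV[C]_(Na + Nb), (nnz v <= w)%N -> (nnz v)%:R <= w%:R :> C.
  by move=> v hv; rewrite ler_nat.
have h1 : delta <= 2^-1 * (mu_a * (w%:R - 2) + w%:R * sqrtC (mu_a ^+ 2 + mu_m ^+ 2)).
  apply: hd; apply: rip_of => v hv.
  apply: le_trans (diff_bound _ _ _ _ v) _.
  under eq_bigr => j _ do rewrite big_split_ord /=.
  rewrite big_split_ord /= !big_split /=.
  have en : norm2 v = \sum_j `|v (lshift Nb j) 0| ^+ 2 + \sum_j `|v (rshift Na j) 0| ^+ 2.
    by rewrite /norm2 big_split_ord.
  rewrite en.
  have cs := CS_ind _ _ (fun j => v (lshift Nb j) 0).
  have cs2 := CS_ind _ _ (fun j => v (rshift Na j) 0).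
  have hs : \sum_j ((v (lshift Nb j) 0 != 0) : nat)%:R + \sum_j ((v (rshift Na j) 0 != 0) : nat)%:R <= w%:R :> C.
    by have := hcard v hv; rewrite nnz_sum big_split_ord /=.
  apply: le_trans (key _ mu_a mu_m (sqrtC (mu_a ^+ 2 + mu_m ^+ 2)) _ _ _ _ _ _ w%:R ma0 mm0 _ _ _ _ _ _ _ _ _ _ hs).
  - apply: lerD; first apply: lerD.
    + apply: (qf _ _ (fun j => `|v (lshift Nb j) 0|) (fun j k => `|colip (row_mx A B) (row_mx A B) (lshift Nb j) (lshift Nb k) - (lshift Nb j == lshift Nb k)%:R|)).
      * by move=> i; exact: normr_ge0.
      * by move=> j k; exact: (E_ll _ _ _ _ A B hA j k).
    + apply: (qf2 _ _ _ (fun j => `|v (lshift Nb j) 0|) (fun k => `|v (rshift Na k) 0|) (fun j k => `|colip (row_mx A B) (row_mx A B) (lshift Nb j) (rshift Na k) - (lshift Nb j == rshift Na k)%:R|)).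
      * by move=> i; exact: normr_ge0.
      * by move=> i; exact: normr_ge0.
      * by move=> j k; exact: (E_lr _ _ _ _ A B j k).
    apply: lerD.
    + apply: (qf2 _ _ _ (fun j => `|v (rshift Na j) 0|) (fun k => `|v (lshift Nb k) 0|) (fun j k => `|colip (row_mx A B) (row_mx A B) (rshift Na j) (lshift Nb k) - (rshift Na j == lshift Nb k)%:R|)).
      * by move=> i; exact: normr_ge0.
      * by move=> i; exact: normr_ge0.
      * by move=> j k; exact: (E_rl _ _ _ _ A B j k).
    + apply: (qf _ _ (fun j => `|v (rshift Na j) 0|) (fun j k => `|colip (row_mx A B) (row_mx A B) (rshift Na j) (rshift Na k) - (rshift Na j == rshift Na k)%:R|)).
      * by move=> i; exact: normr_ge0.
      * move=> j k; apply: le_trans (E_rr _ _ _ _ A B hB j k) _.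
        by apply: ler_wpM2r => //; rewrite ler0n.
  - by rewrite sqrtC_ge0; apply: addr_ge0; apply: exprn_ge0.
  - by rewrite sqrtCK.
  - by apply: sumr_ge0 => i _; exact: normr_ge0.
  - by apply: sumr_ge0 => i _; exact: normr_ge0.
  - by apply: sumr_ge0 => i _; exact: exprn_ge0.
  - by apply: sumr_ge0 => i _; exact: exprn_ge0.
  - by rewrite mulrC.
  - by rewrite mulrC.
  - by apply: sumr_ge0 => i _; exact: ler0n.
  - by apply: sumr_ge0 => i _; exact: ler0n.
have h2 : delta <= mu_d * (w%:R - 1).
  apply: hd; apply: rip_of => v hv.
  apply: le_trans (diff_bound _ _ _ _ v) _.
  have hE : forall j k : 'I_(Na + Nb),
      `|colip (row_mx A B) (row_mx A B) j k - (j == k)%:R| <= mu_d * (j != k)%:R.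
    move=> j k; rewrite -(splitK j) -(splitK k).
    case: (split j) => j'; case: (split k) => k' /=.
    - apply: le_trans (E_ll _ _ _ _ A B hA j' k') _.
      by rewrite eq_shift; apply: ler_wpM2r => //; rewrite ler0n.
    - apply: le_trans (E_lr _ _ _ _ A B j' k') _.
      by rewrite eq_lrshift mulr1.
    - apply: le_trans (E_rl _ _ _ _ A B j' k') _.
      by rewrite eq_rlshift mulr1.
    - apply: le_trans (E_rr _ _ _ _ A B hB j' k') _.
      by rewrite eq_shift; apply: ler_wpM2r => //; rewrite ler0n.
  apply: le_trans (qf _ _ (fun j => `|v j 0|) (fun j k => `|colip (row_mx A B) (row_mx A B) j k - (j == k)%:R|) mu_d _ _) _.
  - by move=> i; exact: normr_ge0.
  - exact: hE.
  have cs := CS_ind _ _ (fun j => v j 0).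
  rewrite -nnz_sum in cs.
  have : (\sum_j `|v j 0|) ^+ 2 <= norm2 v * w%:R.
    by apply: le_trans cs _; apply: ler_wpM2l; [exact: norm2_ge0 | exact: hcard].
  move=> hs.
  rewrite -/(norm2 v).
  apply: le_trans (_ : mu_d * (norm2 v * w%:R - norm2 v) <= _).
    by apply: ler_wpM2l => //; rewrite lerD2r.
  by rewrite le_eqVlt; apply/orP; left; apply/eqP; ring.
rewrite /Order.min; case: ifP => //.
Qed.
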